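(* Let $(\sigma_k)_{k\ge1}$ be a sequence of nonnegative real numbers with mean $\sigma$, i.e. $\lim_{n\to\infty}\frac1n\sum_{k=1}^n\sigma_k=\sigma$. Fix constants $0\le\gamma<\delta<1$. Then \[ \lim_{n\to\infty}\frac1n\sum_{k=\lceil\gamma n\rceil}^{\lfloor\delta n\rfloor}\sigma_k\left(1-\frac kn\right)^{\sigma-1}=(1-\gamma)^\sigma-(1-\delta)^\sigma. \] *)

(* Defs.v *)
From Stdlib Require Import Reals ZArith Arith.
From Coquelicot Require Import Coquelicot.
Open Scope R_scope.

(* floor and ceiling of a real, as naturals (arguments used are >= 0).
   Stdlib's [Int_part x] is the integer floor of x. *)
Definition floor_nat (x : R) : nat := Z.to_nat (Int_part x).
Definition ceil_nat (x : R) : nat := Z.to_nat (- Int_part (- x)).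

(* sum_{k=m}^{n} f k  (empty, i.e. 0, if n < m) *)
Definition rsum (f : nat -> R) (m n : nat) : R := @sum_n_m R_AbelianMonoid f m n.

(* Main.v *)
Require Import Defs.
From Stdlib Require Import Reals ZArith Arith Lra Lia.
From Coquelicot Require Import Coquelicot.
Open Scope R_scope.

Lemma rsum_Sm a p q : (p <= S q)%nat -> rsum a p (S q) = rsum a p q + a (S q).
Proof. intros H; unfold rsum; rewrite sum_n_Sm; auto. Qed.
Lemma rsum_empty a p q : (q < p)%nat -> rsum a p q = 0.
Proof. intros H; unfold rsum; rewrite sum_n_m_zero; auto. Qed.
Lemma rsum_nn a p : rsum a p p = a p.
Proof. unfold rsum; apply sum_n_n. Qed.

Lemma rsum_gen (P : R -> R -> Prop) (a b : nat -> R) p q :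
  P 0 0 ->
  (forall k x y, (p <= k <= q)%nat -> P x y -> P (x + a k) (y + b k)) ->
  P (rsum a p q) (rsum b p q).
Proof.
  intros H0 HS. induction q as [|q IH].
  - destruct p. rewrite !rsum_nn. replace (a 0%nat) with (0 + a 0%nat) by lra.
    replace (b 0%nat) with (0 + b 0%nat) by lra. apply HS; auto; lia.
    rewrite !rsum_empty by lia; auto.
  - destruct (le_lt_dec p (S q)).
    + rewrite !rsum_Sm; auto. apply HS; [lia|]. apply IH. intros; apply HS; auto; lia.
    + rewrite !rsum_empty by lia; auto.
Qed.

Lemma rsum_minus a b p q : rsum (fun k => a k - b k) p q = rsum a p q - rsum b p q.
Proof.
  pose (P := fun x y => x = y - rsum b p q).
  induction q as [|q IH].
  - destruct p. rewrite !rsum_nn; lra. rewrite !rsum_empty by lia; lra.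
  - destruct (le_lt_dec p (S q)).
    + rewrite !rsum_Sm; auto. rewrite IH; lra.
    + rewrite !rsum_empty by lia; lra.
Qed.

Lemma rsum_scal c a p q : rsum (fun k => c * a k) p q = c * rsum a p q.
Proof.
  induction q as [|q IH].
  - destruct p. rewrite !rsum_nn; lra. rewrite !rsum_empty by lia; lra.
  - destruct (le_lt_dec p (S q)).
    + rewrite !rsum_Sm; auto. rewrite IH; lra.
    + rewrite !rsum_empty by lia; lra.
Qed.

Lemma rsum_ext_loc a b p q : (forall k, (p <= k <= q)%nat -> a k = b k) -> rsum a p q = rsum b p q.
Proof. intros; unfold rsum; apply sum_n_m_ext_loc; auto. Qed.

Lemma rsum_le a b p q : (forall k, (p <= k <= q)%nat -> a k <= b k) -> rsum a p q <= rsum b p q.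
Proof.
  intros H. apply (rsum_gen (fun x y => x <= y)); [lra|]. intros k x y Hk Hxy. specialize (H k Hk); lra.
Qed.

Lemma rsum_abs_diff a b w p q : (forall k, (p <= k <= q)%nat -> Rabs (a k - b k) <= w k) ->
  Rabs (rsum a p q - rsum b p q) <= rsum w p q.
Proof.
  intros H. rewrite <- rsum_minus. pose proof (rsum_le (fun k => a k - b k) w p q) as H1.
  pose proof (rsum_le (fun k => - w k) (fun k => a k - b k) p q) as H2.
  replace (rsum (fun k => - w k) p q) with (-1 * rsum w p q) in H2
    by (rewrite <- rsum_scal; apply rsum_ext_loc; intros; lra).
  apply Rabs_le; split.
  - enough (-1 * rsum w p q <= rsum (fun k : nat => a k - b k) p q) by lra.
    apply H2. intros k Hk; specialize (H k Hk); apply Rabs_le_between in H; lra.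
  - apply H1. intros k Hk; specialize (H k Hk); apply Rabs_le_between in H; lra.
Qed.

Lemma rsum_nonneg a p q : (forall k, (p <= k <= q)%nat -> 0 <= a k) -> 0 <= rsum a p q.
Proof.
  intros H. apply (rsum_gen (fun x y => 0 <= x) a a); [lra|]. intros k x y Hk Hx. specialize (H k Hk); lra.
Qed.

Lemma rsum_chasles a p m q : (p <= S m)%nat -> (m <= q)%nat -> rsum a p q = rsum a p m + rsum a (S m) q.
Proof. intros; unfold rsum; rewrite (sum_n_m_Chasles _ p m q); auto. Qed.

Fixpoint bsum (F : nat -> R) (m : nat) : R :=
  match m with O => 0 | S m' => bsum F m' + F m' end.

Lemma bsum_ext F G m : (forall j, (j < m)%nat -> F j = G j) -> bsum F m = bsum G m.
Proof. induction m; simpl; intros H; auto. rewrite IHm, H; auto. Qed.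

Lemma bsum_lim (u : nat -> nat -> R) (l : nat -> R) m :
  (forall j, (j < m)%nat -> is_lim_seq (u j) (l j)) ->
  is_lim_seq (fun n => bsum (fun j => u j n) m) (bsum l m).
Proof.
  induction m; simpl; intros H. apply is_lim_seq_const.
  apply is_lim_seq_plus'; auto.
Qed.

Lemma bsum_abs_diff F G W m : (forall j, (j < m)%nat -> Rabs (F j - G j) <= W j) ->
  Rabs (bsum F m - bsum G m) <= bsum W m.
Proof.
  induction m; simpl; intros H. rewrite Rminus_0_r, Rabs_R0; lra.
  replace (bsum F m + F m - (bsum G m + G m)) with ((bsum F m - bsum G m) + (F m - G m)) by ring.
  eapply Rle_trans. apply Rabs_triang. apply Rplus_le_compat; auto.
Qed.

Lemma bsum_scal c F m : bsum (fun j => c * F j) m = c * bsum F m.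
Proof. induction m; simpl; [lra|]. rewrite IHm; ring. Qed.

Lemma bsum_const c m : bsum (fun _ => c) m = INR m * c.
Proof. induction m; simpl bsum; [simpl; lra|]. rewrite IHm, S_INR; ring. Qed.

Lemma bsum_tele g m : bsum (fun j => g j - g (S j)) m = g O - g m.
Proof. induction m; simpl; [lra|]. rewrite IHm; ring. Qed.

Lemma mono_chain (c : nat -> nat) m : (forall j, (j < m)%nat -> (c j <= c (S j))%nat) ->
  forall j, (j <= m)%nat -> (c O <= c j)%nat.
Proof.
  intros H j; induction j; intros Hj; auto. specialize (H j ltac:(lia)). specialize (IHj ltac:(lia)). lia.
Qed.

Lemma bsum_split a (c : nat -> nat) m : (forall j, (j < m)%nat -> (c j <= c (S j))%nat) ->
  rsum a (S (c O)) (c m) = bsum (fun j => rsum a (S (c j)) (c (S j))) m.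
Proof.
  intros H. induction m; simpl. apply rsum_empty; lia.
  rewrite <- IHm by (intros; apply H; lia).
  apply rsum_chasles. pose proof (mono_chain c (S m) H m ltac:(lia)); lia. apply H; lia.
Qed.

Lemma mono_chain2 (c : nat -> nat) m : (forall j, (j < m)%nat -> (c j <= c (S j))%nat) ->
  forall i j, (i <= j)%nat -> (j <= m)%nat -> (c i <= c j)%nat.
Proof.
  intros H i j; induction j; intros Hij Hj. assert (i = 0%nat) by lia; subst; lia.
  destruct (Nat.eq_dec i (S j)). subst; lia.
  specialize (H j ltac:(lia)). specialize (IHj ltac:(lia) ltac:(lia)). lia.
Qed.

Lemma Int_part_nonneg x : 0 <= x -> (0 <= Int_part x)%Z.
Proof.
  intros H. destruct (base_Int_part x) as [H1 H2].
  assert (IZR (Int_part x) > -1) by lra. apply lt_IZR in H0. lia.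
Qed.

Lemma floor_spec x : 0 <= x -> x - 1 < INR (floor_nat x) <= x.
Proof.
  intros H. unfold floor_nat. rewrite INR_IZR_INZ, Z2Nat.id by (apply Int_part_nonneg; auto).
  destruct (base_Int_part x); lra.
Qed.

Lemma ceil_spec x : 0 <= x -> x <= INR (ceil_nat x) < x + 1.
Proof.
  intros H. unfold ceil_nat. destruct (base_Int_part (-x)) as [H1 H2].
  assert (Hz : (0 <= - Int_part (-x))%Z).
  { assert (IZR (Int_part (-x)) <= 0) by lra.
    apply le_IZR in H0. lia. }
  rewrite INR_IZR_INZ, Z2Nat.id by auto. rewrite opp_IZR. lra.
Qed.

Lemma inv_n_lim : is_lim_seq (fun n => / INR n) 0.
Proof.
  pose proof (is_lim_seq_inv INR p_infty is_lim_seq_INR ltac:(discriminate)). exact H.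
Qed.

Lemma limS (s : nat -> R) (sigma : R)
  (hs : forall k : nat, (1 <= k)%nat -> 0 <= s k)
  (hmean : is_lim_seq (fun n : nat => / INR n * rsum s 1 n) sigma)
  (x : R) (c : nat -> nat) : 0 <= x -> (forall n, Rabs (INR (c n) - x * INR n) <= 1) ->
  is_lim_seq (fun n => / INR n * rsum s 1 (c n)) (sigma * x).
Proof.
  intros Hx Hc. destruct Hx as [Hx | Hx].
  - assert (Hf : filterlim c eventually eventually).
    { intros P [N HN]. destruct (INR_unbounded ((INR N + 1) / x)) as [M HM].
      exists M. intros n Hn. apply HN. apply le_INR in Hn.
      specialize (Hc n). apply Rabs_le_between in Hc.
      assert (INR N < INR (c n)).
      { assert (x * INR M > INR N + 1).
        { apply Rmult_gt_compat_l with (r := x) in HM; auto.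
          replace (x * ((INR N + 1) / x)) with (INR N + 1) in HM by (field; lra). lra. }
        assert (x * INR M <= x * INR n) by (apply Rmult_le_compat_l; lra). lra. }
      apply INR_lt in H. lia. }
    pose proof (is_lim_seq_subseq _ _ c Hf hmean) as H1. simpl in H1.
    assert (H2 : is_lim_seq (fun n => INR (c n) * / INR n) x).
    { apply is_lim_seq_le_le_loc with (u := fun n => x - / INR n) (w := fun n => x + / INR n).
      - exists 1%nat. intros n Hn. apply le_INR in Hn. simpl in Hn.
        assert (E : INR (c n) * / INR n - x = (INR (c n) - x * INR n) * / INR n) by (field; lra).
        assert (Hp : 0 < / INR n) by (apply Rinv_0_lt_compat; lra).
        specialize (Hc n). apply Rabs_le_between in Hc.
        assert (-1 * / INR n <= (INR (c n) - x * INR n) * / INR n <= 1 * / INR n).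
        { split; apply Rmult_le_compat_r; lra. }
        lra.
      - replace (Finite x) with (Finite (x - 0)) by (f_equal; ring).
        apply is_lim_seq_minus'; [apply is_lim_seq_const | apply inv_n_lim].
      - replace (Finite x) with (Finite (x + 0)) by (f_equal; ring).
        apply is_lim_seq_plus'; [apply is_lim_seq_const | apply inv_n_lim]. }
    pose proof (is_lim_seq_mult' _ _ _ _ H1 H2) as H3.
    apply (is_lim_seq_ext_loc _ _ _ ) with (2 := H3).
    pose proof (Hf (fun k => (1 <= k)%nat) ltac:(exists 1%nat; auto)) as [N HN].
    exists N. intros n Hn. specialize (HN n Hn). simpl in HN.
    apply le_INR in HN. simpl in HN.
    replace (/ INR (c n) * rsum s 1 (c n) * (INR (c n) * / INR n)) with
      ((/ INR (c n) * INR (c n)) * (/ INR n * rsum s 1 (c n))) by ring.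
    rewrite Rinv_l by lra. ring.
  - subst x. rewrite Rmult_0_r.
    apply is_lim_seq_le_le_loc with (u := fun _ => 0) (w := fun n => / INR n * s 1%nat).
    + exists 1%nat. intros n Hn. apply le_INR in Hn. simpl in Hn.
      assert (Hp : 0 < / INR n) by (apply Rinv_0_lt_compat; lra).
      specialize (Hc n). rewrite Rmult_0_l, Rminus_0_r, Rabs_pos_eq in Hc by apply pos_INR.
      assert (Hs1 := hs 1%nat (le_n _)).
      assert (c n = 0%nat \/ c n = 1%nat).
      { assert (INR (c n) < INR 2) by (simpl; lra). apply INR_lt in H. lia. }
      destruct H as [H|H]; rewrite H.
      * rewrite rsum_empty by lia. rewrite Rmult_0_r. split; [lra|]. apply Rmult_le_pos; lra.
      * rewrite rsum_nn. split; [apply Rmult_le_pos; lra | lra].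
    + apply is_lim_seq_const.
    + replace (Finite 0) with (Finite (0 * s 1%nat)) by (f_equal; ring).
      apply is_lim_seq_mult'; [apply inv_n_lim | apply is_lim_seq_const].
Qed.

Lemma approx (A : nat -> R) (l : R) :
  (forall eps, 0 < eps -> exists (B : nat -> R) (beta : R), is_lim_seq B beta /\ Rabs (beta - l) <= eps /\
     exists N, forall n, (N <= n)%nat -> Rabs (A n - B n) <= eps) -> is_lim_seq A l.
Proof.
  intros H. apply is_lim_seq_spec. intros eps.
  destruct (H (eps / 3) ltac:(destruct eps; simpl; lra)) as [B [beta [HB [Hb [N HN]]]]].
  apply is_lim_seq_spec in HB. destruct (HB (mkposreal (eps/3) ltac:(destruct eps; simpl; lra))) as [N2 HN2].
  exists (Nat.max N N2). intros n Hn. pose proof (HN n ltac:(lia)) as Ha. pose proof (HN2 n ltac:(lia)) as Hb'.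
  simpl in Hb'.
  replace (A n - l) with ((A n - B n) + (B n - beta) + (beta - l)) by ring.
  eapply Rle_lt_trans. apply Rabs_triang. eapply Rle_lt_trans. apply Rplus_le_compat_r. apply Rabs_triang.
  lra.
Qed.

Lemma dpow c x : x < 1 ->
  derivable_pt_lim (fun y => Rpower (1 - y) c) x (- (c * Rpower (1 - x) (c - 1))).
Proof.
  intros Hx.
  assert (H1 : derivable_pt_lim (fun y => 1 - y) x (0 - 1)).
  { apply (derivable_pt_lim_minus (fct_cte 1) id x 0 1).
    apply derivable_pt_lim_const. apply derivable_pt_lim_id. }
  assert (H2 : derivable_pt_lim (fun t => Rpower t c) (1 - x) (c * Rpower (1 - x) (c - 1))).
  { apply derivable_pt_lim_power. lra. }
  pose proof (derivable_pt_lim_comp _ _ _ _ _ H1 H2) as H3.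
  replace (- (c * Rpower (1 - x) (c - 1))) with (c * Rpower (1 - x) (c - 1) * (0 - 1)) by ring.
  exact H3.
Qed.

Lemma exp_le_mono a b : a <= b -> exp a <= exp b.
Proof. intros [H|H]. left; apply exp_increasing; auto. subst; lra. Qed.

Lemma pow_bound c d x : 0 <= x <= d -> d < 1 ->
  0 < Rpower (1 - x) c <= exp (Rabs c * - ln (1 - d)).
Proof.
  intros Hx Hd. unfold Rpower. split. apply exp_pos. apply exp_le_mono.
  assert (ln (1 - d) <= ln (1 - x)) by (apply ln_le; lra).
  assert (ln (1 - x) <= 0) by (rewrite <- ln_1; apply ln_le; lra).
  eapply Rle_trans. apply Rle_abs. rewrite Rabs_mult. apply Rmult_le_compat_l. apply Rabs_pos.
  rewrite Rabs_left1 by lra. lra.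
Qed.

Lemma lip sigma d : 0 <= d < 1 -> exists L, 0 <= L /\
  forall x y, 0 <= x <= d -> 0 <= y <= d ->
    Rabs (Rpower (1 - x) (sigma - 1) - Rpower (1 - y) (sigma - 1)) <= L * Rabs (x - y).
Proof.
  intros Hd. exists (Rabs (sigma - 1) * exp (Rabs (sigma - 1 - 1) * - ln (1 - d))).
  split. apply Rmult_le_pos. apply Rabs_pos. left; apply exp_pos.
  assert (K : forall x y, 0 <= x <= d -> 0 <= y <= d -> x < y ->
    Rabs (Rpower (1 - x) (sigma - 1) - Rpower (1 - y) (sigma - 1)) <=
    Rabs (sigma - 1) * exp (Rabs (sigma - 1 - 1) * - ln (1 - d)) * Rabs (x - y)).
  { intros x y Hx Hy Hxy.
    destruct (MVT_cor2 (fun y => Rpower (1 - y) (sigma - 1))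
      (fun z => - ((sigma - 1) * Rpower (1 - z) (sigma - 1 - 1))) x y Hxy) as [z [Hz1 Hz2]].
    { intros z Hz. apply dpow. lra. }
    rewrite Rabs_minus_sym, Hz1, Rabs_mult, Rabs_Ropp, Rabs_mult.
    rewrite (Rabs_minus_sym x y). apply Rmult_le_compat_r. apply Rabs_pos.
    apply Rmult_le_compat_l. apply Rabs_pos.
    destruct (pow_bound (sigma - 1 - 1) d z ltac:(lra) ltac:(lra)).
    rewrite Rabs_pos_eq; lra. }
  intros x y Hx Hy. destruct (Rtotal_order x y) as [H|[H|H]].
  - apply K; auto.
  - subst. rewrite !Rminus_diag, Rabs_R0. lra.
  - rewrite Rabs_minus_sym, (Rabs_minus_sym x y). apply K; auto.
Qed.

Lemma mvtF sigma a b : a < b -> b < 1 -> exists z, a < z < b /\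
  Rpower (1 - a) sigma - Rpower (1 - b) sigma = sigma * Rpower (1 - z) (sigma - 1) * (b - a).
Proof.
  intros Hab Hb.
  destruct (MVT_cor2 (fun y => Rpower (1 - y) sigma)
      (fun z => - (sigma * Rpower (1 - z) (sigma - 1))) a b Hab) as [z [Hz1 Hz2]].
  { intros z Hz. apply dpow. lra. }
  exists z. split; auto. lra.
Qed.

Theorem lemma2p8 (s : nat -> R) (sigma gamma delta : R)
  (hs : forall k : nat, (1 <= k)%nat -> 0 <= s k)
  (hmean : is_lim_seq (fun n : nat => / INR n * rsum s 1 n) sigma)
  (hg : 0 <= gamma) (hgd : gamma < delta) (hd : delta < 1) :
  is_lim_seq
    (fun n : nat =>
       / INR n *
       rsum (fun k : nat => s k * Rpower (1 - INR k / INR n) (sigma - 1))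
            (Nat.max 1 (ceil_nat (gamma * INR n))) (floor_nat (delta * INR n)))
    (Rpower (1 - gamma) sigma - Rpower (1 - delta) sigma).
Proof.
  assert (Hinv : forall n, 0 <= / INR n).
  { intros [|n]. simpl; rewrite Rinv_0; lra. left; apply Rinv_0_lt_compat, lt_0_INR; lia. }
  assert (Hsig : 0 <= sigma).
  { assert (H := is_lim_seq_le (fun _ => 0) (fun n : nat => / INR n * rsum s 1 n) 0 sigma).
    simpl in H. apply H; [|apply is_lim_seq_const|exact hmean].
    intros n. apply Rmult_le_pos; auto. apply rsum_nonneg. intros k Hk; apply hs; lia. }
  set (f := fun x => Rpower (1 - x) (sigma - 1)).
  destruct (lip sigma delta ltac:(lra)) as [L [HL Hlip]].
  apply approx. intros eps Heps.
  set (K := 2 * L * (sigma + 1) + sigma * L * (delta - gamma) + 1).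
  assert (HK1 : 2 * L * (sigma + 1) <= K - 1).
  { unfold K. assert (0 <= sigma * L * (delta - gamma)) by (repeat apply Rmult_le_pos; lra). lra. }
  assert (HK2 : sigma * L * (delta - gamma) <= K - 1).
  { unfold K. assert (0 <= 2 * L * (sigma + 1)) by (repeat apply Rmult_le_pos; lra). lra. }
  destruct (INR_unbounded ((delta - gamma) * K / eps)) as [m0 Hm0].
  set (m := S m0).
  assert (Hm : 0 < INR m) by (apply lt_0_INR; unfold m; lia).
  assert (HmB : INR m > (delta - gamma) * K / eps) by (unfold m; rewrite S_INR; lra).
  set (h := (delta - gamma) / INR m).
  assert (Hh : 0 < h) by (unfold h; apply Rdiv_lt_0_compat; lra).
  assert (HhK : h * K <= eps).
  { unfold h. apply Rmult_gt_compat_r with (r := eps) in HmB; [|lra].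
    replace ((delta - gamma) * K / eps * eps) with ((delta - gamma) * K) in HmB by (field; lra).
    replace ((delta - gamma) / INR m * K) with ((delta - gamma) * K / INR m) by (field; lra).
    apply Rmult_le_reg_r with (r := INR m); auto.
    replace ((delta - gamma) * K / INR m * INR m) with ((delta - gamma) * K) by (field; lra). lra. }
  set (x := fun j : nat => gamma + INR j * h).
  assert (Hx0 : x O = gamma) by (unfold x; simpl; ring).
  assert (Hxm : x m = delta) by (unfold x, h; field; lra).
  assert (HxS : forall j, x (S j) = x j + h) by (intros; unfold x; rewrite S_INR; ring).
  assert (Hxr : forall j, (j <= m)%nat -> gamma <= x j <= delta).
  { intros j Hj. apply le_INR in Hj. unfold x. split.
    assert (0 <= INR j * h) by (apply Rmult_le_pos; [apply pos_INR | lra]). lra.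
    assert (INR j * h <= INR m * h) by (apply Rmult_le_compat_r; lra).
    unfold h in *. replace (INR m * ((delta - gamma) / INR m)) with (delta - gamma) in H by (field; lra). lra. }
  set (c := fun j n => match j with O => (Nat.max 1 (ceil_nat (gamma * INR n)) - 1)%nat
                       | _ => floor_nat (x j * INR n) end).
  assert (Hc : forall j n, (j <= m)%nat -> Rabs (INR (c j n) - x j * INR n) <= 1).
  { intros j n Hj. assert (Hn := pos_INR n). destruct j as [|j].
    - simpl c. rewrite Hx0. assert (Hgn : 0 <= gamma * INR n) by (apply Rmult_le_pos; lra).
      destruct (ceil_spec _ Hgn) as [C1 C2].
      destruct (ceil_nat (gamma * INR n)) as [|k] eqn:E.
      + simpl in C1. simpl. rewrite Rabs_left1; lra.
      + replace (Nat.max 1 (S k) - 1)%nat with k by lia; replace (S k - 1)%nat with k by lia. rewrite S_INR in C1, C2.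
        apply Rabs_le; lra.
    - simpl c. assert (0 <= x (S j) * INR n).
      { apply Rmult_le_pos; auto. destruct (Hxr (S j) Hj); lra. }
      destruct (floor_spec _ H). apply Rabs_le; lra. }
  exists (fun n => bsum (fun j => f (x j) * (/ INR n * rsum s 1 (c (S j) n) - / INR n * rsum s 1 (c j n))) m).
  exists (bsum (fun j => f (x j) * (sigma * x (S j) - sigma * x j)) m).
  split; [|split].
  - apply (bsum_lim (fun j n => f (x j) * (/ INR n * rsum s 1 (c (S j) n) - / INR n * rsum s 1 (c j n)))
                    (fun j => f (x j) * (sigma * x (S j) - sigma * x j))). intros j Hj.
    apply is_lim_seq_mult'. apply is_lim_seq_const.
    destruct (Hxr (S j) Hj). destruct (Hxr j ltac:(lia)).
    apply is_lim_seq_minus'; apply (limS s sigma hs hmean); try lra; intros n; apply Hc; lia.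
  - rewrite <- Hx0, <- Hxm.
    rewrite <- (bsum_tele (fun j => Rpower (1 - x j) sigma) m).
    eapply Rle_trans. rewrite Rabs_minus_sym.
    apply (bsum_abs_diff _ _ (fun _ => sigma * L * h * h)).
    + intros j Hj. destruct (Hxr j ltac:(lia)) as [X1 X2]. destruct (Hxr (S j) ltac:(lia)) as [X3 X4].
      destruct (mvtF sigma (x j) (x (S j)) ltac:(rewrite HxS; lra) ltac:(lra)) as [z [Hz1 Hz2]].
      rewrite Hz2. rewrite HxS in *.
      replace (sigma * Rpower (1 - z) (sigma - 1) * (x j + h - x j) -
               f (x j) * (sigma * (x j + h) - sigma * x j)) with
              (sigma * h * (Rpower (1 - z) (sigma - 1) - f (x j))) by (unfold f; ring).
      rewrite Rabs_mult, (Rabs_pos_eq (sigma * h)) by (apply Rmult_le_pos; lra).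
      replace (sigma * L * h * h) with (sigma * h * (L * h)) by ring.
      apply Rmult_le_compat_l. apply Rmult_le_pos; lra.
      eapply Rle_trans. apply Hlip; lra.
      apply Rmult_le_compat_l; auto. rewrite Rabs_pos_eq; lra.
    + rewrite bsum_const.
      replace (INR m * (sigma * L * h * h)) with (sigma * L * (INR m * h) * h) by ring.
      replace (INR m * h) with (delta - gamma) by (unfold h; field; lra).
      apply Rle_trans with ((K - 1) * h). apply Rmult_le_compat_r; lra. lra.
  - apply is_lim_seq_spec in hmean. destruct (hmean (mkposreal 1 Rlt_0_1)) as [N1 HN1].
    destruct (INR_unbounded (2 / h)) as [N2 HN2].
    exists (Nat.max (Nat.max N1 N2) 1). intros n Hn.
    assert (Hn1 : 1 <= INR n) by (apply (le_INR 1); lia).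
    assert (Hnh : 2 <= INR n * h).
    { assert (INR N2 <= INR n) by (apply le_INR; lia).
      apply Rmult_le_compat_r with (r := h) in H; [|lra].
      apply Rmult_gt_compat_r with (r := h) in HN2; [|lra].
      replace (2 / h * h) with 2 in HN2 by (field; lra). lra. }
    assert (HS1 : / INR n * rsum s 1 n <= sigma + 1).
    { specialize (HN1 n ltac:(lia)). simpl in HN1. apply Rabs_lt_between in HN1. lra. }
    assert (Hpn : 0 < / INR n) by (apply Rinv_0_lt_compat; lra).
    assert (Hmono : forall j, (j < m)%nat -> (c j n <= c (S j) n)%nat).
    { intros j Hj. apply INR_le.
      pose proof (Hc j n ltac:(lia)) as A1. pose proof (Hc (S j) n Hj) as A2.
      apply Rabs_le_between in A1. apply Rabs_le_between in A2. rewrite HxS in A2. lra. }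
    assert (Htop : c m n = floor_nat (delta * INR n)) by (unfold c, m; fold m; rewrite Hxm; reflexivity).
    assert (Hbot : Nat.max 1 (ceil_nat (gamma * INR n)) = S (c O n)) by (simpl c; destruct (ceil_nat (gamma * INR n)); simpl; lia).
    assert (Hcm : (c m n <= n)%nat).
    { apply INR_le. rewrite Htop. assert (0 <= delta * INR n) by (apply Rmult_le_pos; lra).
      destruct (floor_spec _ H).
      assert (delta * INR n <= INR n) by (rewrite <- (Rmult_1_l (INR n)) at 2; apply Rmult_le_compat_r; lra). lra. }
    rewrite Hbot, <- Htop.
    rewrite (bsum_split _ (fun j => c j n) m Hmono).
    rewrite (bsum_ext (fun j => f (x j) * (/ INR n * rsum s 1 (c (S j) n) - / INR n * rsum s 1 (c j n)))
                      (fun j => / INR n * rsum (fun k => f (x j) * s k) (S (c j n)) (c (S j) n))).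
    2: { intros j Hj. rewrite rsum_scal.
         rewrite (rsum_chasles s 1 (c j n) (c (S j) n)) by (try lia; apply Hmono; auto). ring. }
    rewrite bsum_scal, <- Rmult_minus_distr_l, Rabs_mult, (Rabs_pos_eq (/ INR n)) by lra.
    eapply Rle_trans. apply Rmult_le_compat_l. lra.
    apply (bsum_abs_diff _ _ (fun j => rsum (fun k => 2 * L * h * s k) (S (c j n)) (c (S j) n))).
    + intros j Hj. apply rsum_abs_diff. intros k Hk.
      assert (Hk1 : (c j n <= c m n)%nat) by (apply (mono_chain2 _ m Hmono); lia).
      assert (Hk2 : (c (S j) n <= c m n)%nat) by (apply (mono_chain2 _ m Hmono); lia).
      assert (Hsk : 0 <= s k) by (apply hs; lia).
      replace (s k * Rpower (1 - INR k / INR n) (sigma - 1) - f (x j) * s k) with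
        (s k * (f (INR k / INR n) - f (x j))) by (unfold f; ring).
      rewrite Rabs_mult, (Rabs_pos_eq (s k)) by lra.
      replace (2 * L * h * s k) with (s k * (L * (2 * h))) by ring.
      apply Rmult_le_compat_l; auto.
      pose proof (Hc j n ltac:(lia)) as A1. pose proof (Hc (S j) n ltac:(lia)) as A2.
      apply Rabs_le_between in A1. apply Rabs_le_between in A2. rewrite HxS in A2.
      destruct (Hxr j ltac:(lia)) as [X1 X2].
      assert (K1 : INR (c j n) + 1 <= INR k) by (rewrite <- S_INR; apply le_INR; lia).
      assert (K2 : INR k <= INR (c (S j) n)) by (apply le_INR; lia).
      assert (K3 : INR k <= delta * INR n).
      { assert (INR k <= INR (c m n)) by (apply le_INR; lia). rewrite Htop in H.
        assert (0 <= delta * INR n) by (apply Rmult_le_pos; lra).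
        destruct (floor_spec _ H0). lra. }
      assert (E : INR k / INR n - x j = (INR k - x j * INR n) * / INR n) by (field; lra).
      assert (E2 : INR k / INR n = INR k * / INR n) by (unfold Rdiv; auto).
      assert (B1 : 0 <= INR k / INR n - x j).
      { rewrite E. apply Rmult_le_pos; lra. }
      assert (B2 : INR k / INR n - x j <= 2 * h).
      { rewrite E. apply Rle_trans with ((INR n * h + 1) * / INR n).
        apply Rmult_le_compat_r; lra.
        replace ((INR n * h + 1) * / INR n) with (h + / INR n) by (field; lra).
        assert (/ INR n <= h).
        { apply Rmult_le_reg_r with (r := INR n); [lra|]. rewrite Rinv_l by lra. lra. }
        lra. }
      assert (B3 : 0 <= INR k / INR n <= delta).
      { rewrite E2. split. apply Rmult_le_pos; [apply pos_INR | lra].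
        apply Rmult_le_reg_r with (r := INR n); [lra|].
        rewrite Rmult_assoc, Rinv_l by lra. lra. }
      eapply Rle_trans. apply Hlip; lra. apply Rmult_le_compat_l; auto.
      rewrite Rabs_pos_eq; lra.
    + rewrite (bsum_ext _ (fun j => 2 * L * h * rsum s (S (c j n)) (c (S j) n)))
        by (intros; apply rsum_scal).
      rewrite bsum_scal, <- (bsum_split s (fun j => c j n) m Hmono).
      assert (Hsub : rsum s (S (c O n)) (c m n) <= rsum s 1 n).
      { assert (c O n <= c m n)%nat by (apply (mono_chain2 _ m Hmono); lia).
        rewrite (rsum_chasles s 1 (c O n) n) by lia.
        rewrite (rsum_chasles s (S (c O n)) (c m n) n) by lia.
        assert (0 <= rsum s 1 (c O n)) by (apply rsum_nonneg; intros; apply hs; lia).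
        assert (0 <= rsum s (S (c m n)) n) by (apply rsum_nonneg; intros; apply hs; lia).
        lra. }
      assert (0 <= 2 * L * h) by (apply Rmult_le_pos; [apply Rmult_le_pos|]; lra).
      apply Rle_trans with (2 * L * h * (/ INR n * rsum s 1 n)).
      { replace (/ INR n * (2 * L * h * rsum s (S (c 0%nat n)) (c m n))) with
          (2 * L * h * (/ INR n * rsum s (S (c 0%nat n)) (c m n))) by ring.
        apply Rmult_le_compat_l; auto. apply Rmult_le_compat_l; lra. }
      apply Rle_trans with (2 * L * h * (sigma + 1)). apply Rmult_le_compat_l; auto.
      apply Rle_trans with ((K - 1) * h). replace (2 * L * h * (sigma + 1)) with (2 * L * (sigma + 1) * h) by ring.
      apply Rmult_le_compat_r; lra. lra.
Qed.
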